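(* Let $(\mathbf k,\log)$ be an ordered field with surjective logarithm, $(\mathbf k((G)),l)$ a series field with prelogarithmic section, $\psi$ a morphism from $(\mathbf k((G)),l)$ to itself, and $H\ne\{1\}$ a subgroup of $G$ satisfying the growth axiom. Then for every $m\ge0$, $G^0_m$ satisfies the growth axiom, and for every $n\ge0$, $G^{n+1}_m$ is the anti-lexicographic product of $G^n_m$ and $\mathrm{Exp}\,\mathbf k(((G^n_m)^{>G^{n-1}_m}))$. Moreover $\mathrm{Exp}\,\mathbf k(((G^n_m)^{>1}))\subseteq G^{n+1}_m$.
   Context: Let $\mathbf k$ be an ordered field and $(G,\cdot,<)$ a totally ordered abelian group (written multiplicatively). $\mathbf k((G))$ denotes the field of generalized power series $\alpha=\sum_{g\in G}\alpha(g)\,g$ ($\alpha(g)\in\mathbf k$) with anti-well-ordered support, usual operations, canonical valuation $v(\alpha)=\max\operatorname{supp}\alpha$ and ordering $\alpha>0$ iff $\alpha(v(\alpha))>0$; $\mathbf k$, $G$ are identified with subsets of $\mathbf k((G))$. For $S\subseteq G$, $\mathbf k((S))=\{\alpha:\operatorname{supp}\alpha\subseteq S\}$. For a subgroup $H$ and $A\subseteq G$, $H^{>A}=\{h\in H:h>a\ \forall a\in A\}$, $H^{>1}=\{h\in H:h>1\}$. Every $\alpha>0$ is uniquely $\alpha=g\,a(1+\varepsilon)$ with $g=v(\alpha)$, $a\in\mathbf k^{>0}$, $\varepsilon\in\mathbf k((G^{<1}))$. A prelogarithmic section is an order-preserving group embedding $l:(G,\cdot)\to(\mathbf k((G^{>1})),+)$;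 the prelogarithm of $l$ is $L(g\,a(1+\varepsilon))=l(g)+\log a+\sum_{i\ge1}(-1)^{i-1}\varepsilon^i/i$. Exponential extension: $G^\#$ is the ordered abelian group of formal symbols $e(\alpha)$, $\alpha\in\mathbf k((G^{>1}))$, with $e(\alpha)e(\beta)=e(\alpha+\beta)$, $e(\alpha)<e(\beta)\iff\alpha<\beta$, and $e(l(g))$ identified with $g\in G$; $l^\#(e(\alpha))=\alpha$ is a prelogarithmic section of $\mathbf k((G^\#))$ extending $l$. Iterating: $G^{\#n}$, $l^{\#n}$, $L^{\#n}$. The EL-series field is $\mathbf k((G))^{EL}=\bigcup_n\mathbf k((G^{\#n}))$ with $\mathrm{Log}=\bigcup_nL^{\#n}$ and $\mathrm{Exp}=\mathrm{Log}^{-1}$. An order-preserving group embedding $\psi:G\to G$, extended to $\mathbf k((G))$ by $\psi(\sum a_gg)=\sum a_g\psi(g)$, is a morphism of $(\mathbf k((G)),l)$ to itself if $\psi\circ l=l\circ\psi$ on $G$; $\psi^{(m)}$ is its $m$-fold composite. A subgroup $H\ne\{1\}$ of $G$ satisfies the growth axiom if $\mathrm{Log}(h)<|f|$ for all $h\in H$ and all nonzero $f\in\mathbf k((H^{>1}))$. ''Anti-lexicographic product'' of subgroups $A,B$: the group is $A\cdot B$, the product is direct and $A$ is convex in it. LE construction: $G^{-1}_m=\{1\}$, $G^0_m=\psi^{(m)}(H)$, $G^{n+1}_m=G^n_m\cdot\mathrm{Exp}\,\mathbf k(((G^n_m)^{>G^{n-1}_m}))\subseteq G^{\#(n+1)}$.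 *)

(* Defs.v *)
From HB Require Import structures.
From mathcomp Require Import all_boot all_order all_algebra.
From Stdlib Require Import ClassicalEpsilon.
Import Order.TTheory GRing.Theory Num.Theory.
Local Open Scope ring_scope.

Record ogroup := OGroup {
  og_car :> Type;
  og_mul : og_car -> og_car -> og_car;
  og_one : og_car;
  og_inv : og_car -> og_car;
  og_lt : og_car -> og_car -> Prop;
  og_mulA : forall x y z, og_mul x (og_mul y z) = og_mul (og_mul x y) z;
  og_mulC : forall x y, og_mul x y = og_mul y x;
  og_mul1 : forall x, og_mul og_one x = x;
  og_mulV : forall x, og_mul (og_inv x) x = og_one;
  og_lt_irr : forall x, ~ og_lt x x;
  og_lt_trans : forall x y z, og_lt x y -> og_lt y z -> og_lt x z;
  og_lt_total : forall x y, og_lt x y \/ x = y \/ og_lt y x;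
  og_lt_mul : forall x y z, og_lt x y -> og_lt (og_mul x z) (og_mul y z)
}.
Arguments og_mul : clear implicits.
Arguments og_one : clear implicits.
Arguments og_inv : clear implicits.
Arguments og_lt : clear implicits.

Definition anti_wo {A : Type} (lt : A -> A -> Prop) (S : A -> Prop) :=
  forall T : A -> Prop, (forall x, T x -> S x) -> (exists x, T x) ->
    exists x, T x /\ forall y, T y -> ~ lt x y.

(* f : A -> k is a generalized power series with support contained in S. *)
Definition series_on {k : realFieldType} {A : Type} (lt : A -> A -> Prop)
  (S : A -> Prop) (f : A -> k) :=
  (forall x, f x <> 0 -> S x) /\ anti_wo lt (fun x => f x <> 0).

(* f < g in k((A)): the leading coefficient of g - f is positive. *)
Definition series_lt {k : realFieldType} {A : Type} (lt : A -> A -> Prop)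
  (f g : A -> k) :=
  exists x, f x < g x /\ forall y, lt x y -> f y = g y.

Definition sabs {k : realFieldType} {A : Type} (lt : A -> A -> Prop) (f : A -> k)
  : A -> k :=
  if excluded_middle_informative (series_lt lt (fun _ => 0) f) then f
  else (fun x => - f x).

Definition push {k : realFieldType} {A B : Type} (f : A -> B) (a : A -> k) : B -> k :=
  fun y => match excluded_middle_informative (exists x, f x = y) with
           | left H => a (proj1_sig (constructive_indefinite_description _ H))
           | right _ => 0
           end.

Record lv (k : realFieldType) := Lv {
  lR : Type;
  lmem : lR -> Prop;
  lmul : lR -> lR -> lR;
  lone : lR;
  linv : lR -> lR;
  llt : lR -> lR -> Prop
}.
Arguments lR {k}.
Arguments lmem {k}.
Arguments lmul {k}.
Arguments lone {k}.
Arguments linv {k}.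
Arguments llt {k}.

Definition base (k : realFieldType) (G : ogroup) : lv k :=
  @Lv k (og_car G) (fun _ => True) (og_mul G) (og_one G) (og_inv G) (og_lt G).

(* exponential extension: e(alpha) is represented by alpha itself,
   alpha in k((X^{>1})); the group law is addition, the order that of series *)
Definition sharp {k : realFieldType} (X : lv k) : lv k :=
  @Lv k (lR X -> k)
    (fun f : lR X -> k => series_on (llt X) (fun x => lmem X x /\ llt X (lone X) x) f)
    (fun f g x => f x + g x) (fun _ => 0) (fun f x => - f x)
    (series_lt (llt X)).

Fixpoint tower (k : realFieldType) (G : ogroup) (n : nat) : lv k :=
  match n with 0 => base k G | S n' => sharp (tower k G n') end.

(* l^{#n} : G^{#n} -> k((G^{#n})); it is also the identification of G^{#n}
   inside G^{#(n+1)} (e(l^{#n}(x)) = x). *)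
Fixpoint lsh {k : realFieldType} {G : ogroup} (l : G -> G -> k) (n : nat)
  : lR (tower k G n) -> lR (tower k G n.+1) :=
  match n return lR (tower k G n) -> lR (tower k G n.+1) with
  | 0 => l
  | S n' => fun x => push (lsh l n') x
  end.

Definition is_surj_log {k : realFieldType} (log : k -> k) :=
  (forall x y, 0 < x -> 0 < y -> log (x * y) = log x + log y) /\
  (forall x y, 0 < x -> x < y -> log x < log y) /\
  (forall y, exists x, 0 < x /\ log x = y).

Definition prelog_section {k : realFieldType} {G : ogroup} (l : G -> G -> k) :=
  (forall g h, l (og_mul G g h) = (fun x => l g x + l h x)) /\
  (forall g h, og_lt G g h -> series_lt (og_lt G) (l g) (l h)) /\
  (forall g, series_on (og_lt G) (fun x => og_lt G (og_one G) x) (l g)).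

Definition lmorphism {k : realFieldType} {G : ogroup} (l : G -> G -> k)
  (psi : G -> G) :=
  (forall g h, psi (og_mul G g h) = og_mul G (psi g) (psi h)) /\
  (forall g h, og_lt G g h -> og_lt G (psi g) (psi h)) /\
  (forall g, push psi (l g) = l (psi g)).

Definition subgroup {k : realFieldType} (X : lv k) (S : lR X -> Prop) :=
  (forall x, S x -> lmem X x) /\ S (lone X) /\
  (forall x y, S x -> S y -> S (lmul X x y)) /\
  (forall x, S x -> S (linv X x)).

(* growth axiom for H (a nontrivial subgroup of G); Log(h) = l(h) for h in G *)
Definition growth_axiom {k : realFieldType} {G : ogroup} (l : G -> G -> k)
  (H : G -> Prop) :=
  subgroup (base k G) H /\ (exists h, H h /\ h <> og_one G) /\
  forall h, H h -> forall f : G -> k,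
    series_on (og_lt G) (fun x => H x /\ og_lt G (og_one G) x) f ->
    f <> (fun _ => 0) ->
    series_lt (og_lt G) (l h) (sabs (og_lt G) f).

Definition lle {k : realFieldType} (X : lv k) (x y : lR X) := llt X x y \/ x = y.

Definition convex_in {k : realFieldType} (X : lv k) (A C : lR X -> Prop) :=
  forall a1 a2 z, A a1 -> A a2 -> C z -> lle X a1 z -> lle X z a2 -> A z.

Definition antilex_product {k : realFieldType} (X : lv k) (C A B : lR X -> Prop) :=
  subgroup X A /\ subgroup X B /\ subgroup X C /\
  (forall z, C z <-> exists a b, A a /\ B b /\ z = lmul X a b) /\
  (forall z, A z -> B z -> z = lone X) /\
  convex_in X A C.

(* LE construction: returns (G^n_m, the predicate "x > G^{n-1}_m") *)
Fixpoint LE {k : realFieldType} {G : ogroup} (l : G -> G -> k) (psi : G -> G)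
  (H : G -> Prop) (m n : nat)
  : (lR (tower k G n) -> Prop) * (lR (tower k G n) -> Prop) :=
  match n return (lR (tower k G n) -> Prop) * (lR (tower k G n) -> Prop) with
  | 0 => ((fun x : G => exists h, H h /\ x = iter m psi h),
          (fun x : G => og_lt G (og_one G) x))
  | S n' =>
      let p := LE l psi H m n' in
      ((fun z => exists a alpha, p.1 a /\
           series_on (llt (tower k G n')) (fun x => p.1 x /\ p.2 x) alpha /\
           z = lmul (tower k G n'.+1) (lsh l n' a) alpha),
       (fun z => forall y, p.1 y -> llt (tower k G n'.+1) (lsh l n' y) z))
  end.

Definition Gnm {k : realFieldType} {G : ogroup} (l : G -> G -> k) (psi : G -> G)
  (H : G -> Prop) (m n : nat) : lR (tower k G n) -> Prop := (LE l psi H m n).1.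

Definition Gnm_above {k : realFieldType} {G : ogroup} (l : G -> G -> k)
  (psi : G -> G) (H : G -> Prop) (m n : nat) : lR (tower k G n) -> Prop :=
  fun x => (LE l psi H m n).1 x /\ (LE l psi H m n).2 x.

(* Exp k((S)) for S a set of positive elements of G^{#n}: the monomials e(alpha) *)
Definition ExpSet {k : realFieldType} {G : ogroup} (n : nat)
  (S : lR (tower k G n) -> Prop) : lR (tower k G n.+1) -> Prop :=
  fun alpha => series_on (llt (tower k G n)) S alpha.

Definition embed {k : realFieldType} {G : ogroup} (l : G -> G -> k) (n : nat)
  (A : lR (tower k G n) -> Prop) : lR (tower k G n.+1) -> Prop :=
  fun z => exists a, A a /\ z = lsh l n a.

(* Main.v *)
Require Import Defs.
From HB Require Import structures.
From mathcomp Require Import all_boot all_order all_algebra.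
From Stdlib Require Import Classical ClassicalEpsilon FunctionalExtensionality.
Import Order.TTheory GRing.Theory Num.Theory.
Local Open Scope ring_scope.
Set Implicit Arguments.


Section Generic.
Variable k : realFieldType.
Variable A : Type.
Variable lt : A -> A -> Prop.
Variable mem : A -> Prop.
Hypothesis lt_irr : forall x, ~ lt x x.
Hypothesis lt_tr : forall x y z, mem x -> mem y -> mem z -> lt x y -> lt y z -> lt x z.
Hypothesis lt_tot : forall x y, mem x -> mem y -> lt x y \/ x = y \/ lt y x.

Lemma awo_sub {S S' : A -> Prop} : anti_wo lt S -> (forall x, S' x -> S x) -> anti_wo lt S'.
Proof. move=> HS HS' T HT ne; apply: HS ne => x /HT /HS'. done. Qed.

Lemma awo_union {S1 S2 : A -> Prop} : (forall x, S1 x -> mem x) -> (forall x, S2 x -> mem x) ->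
  anti_wo lt S1 -> anti_wo lt S2 -> anti_wo lt (fun x => S1 x \/ S2 x).
Proof.
move=> M1 M2 W1 W2 T HT [x0 Tx0].
have [[y1 Ty1] | N1] := classic (exists y, T y /\ S1 y);
have [[y2 Ty2] | N2] := classic (exists y, T y /\ S2 y).
- have [m1 [[Tm1 S1m1] Mx1]] := W1 (fun y => T y /\ S1 y) (fun y h => proj2 h) (ex_intro _ y1 Ty1).
  have [m2 [[Tm2 S2m2] Mx2]] := W2 (fun y => T y /\ S2 y) (fun y h => proj2 h) (ex_intro _ y2 Ty2).
  have [lt12|[e|lt21]] := lt_tot (M1 _ S1m1) (M2 _ S2m2).
  + exists m2; split=> // y Ty lt2y.
    case: (HT y Ty) => Sy.
    * exact: (Mx1 y (conj Ty Sy) (lt_tr (M1 _ S1m1) (M2 _ S2m2) (M1 _ Sy) lt12 lt2y)).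
    * exact: (Mx2 y (conj Ty Sy)).
  + exists m2; split=> // y Ty lt2y.
    case: (HT y Ty) => Sy.
    * by apply: (Mx1 y (conj Ty Sy)); rewrite e.
    * exact: (Mx2 y (conj Ty Sy)).
  + exists m1; split=> // y Ty lt1y.
    case: (HT y Ty) => Sy.
    * exact: (Mx1 y (conj Ty Sy)).
    * exact: (Mx2 y (conj Ty Sy) (lt_tr (M2 _ S2m2) (M1 _ S1m1) (M2 _ Sy) lt21 lt1y)).
- have [m1 [[Tm1 S1m1] Mx1]] := W1 (fun y => T y /\ S1 y) (fun y h => proj2 h) (ex_intro _ y1 Ty1).
  exists m1; split=> // y Ty lt1y; case: (HT y Ty) => Sy.
  + exact: (Mx1 y (conj Ty Sy)).
  + by apply: N2; exists y.
- have [m2 [[Tm2 S2m2] Mx2]] := W2 (fun y => T y /\ S2 y) (fun y h => proj2 h) (ex_intro _ y2 Ty2).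
  exists m2; split=> // y Ty lt1y; case: (HT y Ty) => Sy.
  + by apply: N1; exists y.
  + exact: (Mx2 y (conj Ty Sy)).
- exfalso; case: (HT x0 Tx0) => Sx0; [apply: N1 | apply: N2]; by exists x0.
Qed.

Lemma series_on_zero {S : A -> Prop} : series_on lt S (fun _ => 0 : k).
Proof.
split=> [x //|T HT [x Tx]]; by case: (HT x Tx).
Qed.

Lemma series_on_opp {S : A -> Prop} {f : A -> k} : series_on lt S f -> series_on lt S (fun x => - f x).
Proof.
move=> [Hs Hw]; split.
- move=> x h; apply: Hs => e; apply: h; by rewrite e oppr0.
- refine (awo_sub Hw _) => x h e; apply: h; by rewrite e oppr0.
Qed.

Lemma neq0_sum {a b : k} : a + b <> 0 -> a <> 0 \/ b <> 0.
Proof. move=> h; apply: NNPP => /not_or_and [/NNPP a0 /NNPP b0]; apply: h; by rewrite a0 b0 addr0. Qed.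

Lemma series_on_add {S : A -> Prop} {f g : A -> k} : (forall x, S x -> mem x) ->
  series_on lt S f -> series_on lt S g -> series_on lt S (fun x => f x + g x).
Proof.
move=> SM [Hs Hw] [Gs Gw]; split.
- by move=> x /neq0_sum [/Hs|/Gs].
- refine (awo_sub (awo_union (fun x h => SM _ (Hs _ h)) (fun x h => SM _ (Gs _ h)) Hw Gw) _) => x; exact: neq0_sum.
Qed.

Lemma series_on_weaken {S S' : A -> Prop} {f : A -> k} : (forall x, S x -> S' x) ->
  series_on lt S f -> series_on lt S' f.
Proof. by move=> SS [h1 h2]; split=> // x /h1 /SS. Qed.

Lemma slt_irr {f : A -> k} : ~ series_lt lt f f.
Proof. by move=> [x [h _]]; rewrite ltxx in h. Qed.

Lemma lt_neq {a b : k} : a < b -> a <> b.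
Proof. by move=> h e; rewrite e ltxx in h. Qed.

Lemma neq_supp {f g : A -> k} {x} : f x <> g x -> f x <> 0 \/ g x <> 0.
Proof. move=> h; apply: NNPP => /not_or_and [/NNPP a0 /NNPP b0]; apply: h; by rewrite a0 b0. Qed.

Lemma slt_mem {S : A -> Prop} {f g : A -> k} {x} : (forall x, S x -> mem x) ->
  series_on lt S f -> series_on lt S g -> f x <> g x -> mem x.
Proof. by move=> SM [Hs _] [Gs _] /neq_supp [/Hs/SM|/Gs/SM]. Qed.

Lemma slt_asym {S : A -> Prop} {f g : A -> k} : (forall x, S x -> mem x) ->
  series_on lt S f -> series_on lt S g -> series_lt lt f g -> series_lt lt g f -> False.
Proof.
move=> SM Sf Sg [x [h1 h2]] [y [h3 h4]].
have mx := slt_mem SM Sf Sg (lt_neq h1).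
have my := slt_mem SM Sf Sg (nesym (lt_neq h3)).
have [xy|[e|yx]] := lt_tot mx my.
- by move: h3; rewrite (h2 y xy) ltxx.
- by subst y; move: (lt_trans h1 h3); rewrite ltxx.
- by move: h1; rewrite (h4 x yx) ltxx.
Qed.

Lemma slt_trans {S : A -> Prop} {f g h : A -> k} : (forall x, S x -> mem x) ->
  series_on lt S f -> series_on lt S g -> series_on lt S h ->
  series_lt lt f g -> series_lt lt g h -> series_lt lt f h.
Proof.
move=> SM Sf Sg Sh [x [h1 h2]] [y [h3 h4]].
have mx := slt_mem SM Sf Sg (lt_neq h1).
have my := slt_mem SM Sg Sh (lt_neq h3).
have [xy|[e|yx]] := lt_tot mx my.
- exists y; split; first by rewrite (h2 y xy).
  move=> z yz; rewrite -(h4 z yz).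
  apply: NNPP => ne; apply ne; apply: h2.
  exact: (lt_tr mx my (slt_mem SM Sf Sg ne) xy yz).
- subst y; exists x; split; first exact: lt_trans h1 h3.
  by move=> z xz; rewrite (h2 z xz) (h4 z xz).
- exists x; split; first by rewrite -(h4 x yx).
  move=> z xz; rewrite (h2 z xz).
  apply: NNPP => ne; apply ne; apply: h4.
  exact: (lt_tr my mx (slt_mem SM Sg Sh ne) yx xz).
Qed.

Lemma lead_ex {S : A -> Prop} {f : A -> k} : series_on lt S f -> f <> (fun _ => 0) ->
  exists x0, f x0 <> 0 /\ forall y, lt x0 y -> f y = 0.
Proof.
move=> [Hs Hw] ne.
have [x Hx] : exists x, f x <> 0.
  apply: NNPP => N; apply: ne; apply: functional_extensionality => x.
  apply: NNPP => h; apply: N; by exists x.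
have [x0 [h1 h2]] := Hw (fun x => f x <> 0) (fun x h => h) (ex_intro _ x Hx).
exists x0; split=> // y xy; apply: NNPP => h; exact: (h2 y h xy).
Qed.

Lemma slt_total {S : A -> Prop} {f g : A -> k} : (forall x, S x -> mem x) ->
  series_on lt S f -> series_on lt S g -> series_lt lt f g \/ f = g \/ series_lt lt g f.
Proof.
move=> SM Sf Sg.
have [[x0 Hx0]|N] := classic (exists x, f x <> g x); last first.
  right; left; apply: functional_extensionality => x; apply: NNPP => h; apply: N; by exists x.
case: Sf Sg => [Hs Hw] [Gs Gw].
have W := awo_union (fun x h => SM _ (Hs _ h)) (fun x h => SM _ (Gs _ h)) Hw Gw.
have [x [h1 h2]] := W (fun x => f x <> g x) (fun x h => neq_supp h) (ex_intro _ x0 Hx0).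
have ab : forall y, lt x y -> f y = g y by move=> y xy; apply: NNPP => h; exact: (h2 y h xy).
have : f x != g x by apply/eqP.
move/lt_total/orP=> [lfg|lgf].
- by left; exists x.
- by right; right; exists x; split=> // y /ab.
Qed.

Lemma slt_add {f g h : A -> k} : series_lt lt f g -> series_lt lt (fun x => f x + h x) (fun x => g x + h x).
Proof. move=> [x [h1 h2]]; exists x; split; first by rewrite ltrD2r. by move=> y /h2 ->. Qed.

Lemma slt_opp {f g : A -> k} : series_lt lt f g -> series_lt lt (fun x => - g x) (fun x => - f x).
Proof. move=> [x [h1 h2]]; exists x; split; first by rewrite ltrN2. by move=> y /h2 ->. Qed.

Lemma lead_pos {f : A -> k} x0 : (forall y, lt x0 y -> f y = 0) -> 0 < f x0 -> series_lt lt (fun _ => 0) f.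
Proof. move=> h1 h2; exists x0; split=> // y /h1 -> //. Qed.

Lemma lead_neg {f : A -> k} x0 : (forall y, lt x0 y -> f y = 0) -> f x0 < 0 -> series_lt lt f (fun _ => 0).
Proof. move=> h1 h2; exists x0; split=> // y /h1 -> //. Qed.

Lemma sabs_pos {f : A -> k} : series_lt lt (fun _ => 0) f -> sabs lt f = f.
Proof. by rewrite /sabs; case: excluded_middle_informative. Qed.

Lemma sabs_npos {f : A -> k} : ~ series_lt lt (fun _ => 0) f -> sabs lt f = (fun x => - f x).
Proof. by rewrite /sabs; case: excluded_middle_informative. Qed.

End Generic.
Arguments lt_neq {k a b}.
Arguments neq_supp {k A f g x}.
Arguments lead_pos {k A lt f x0}.
Arguments lead_neg {k A lt f x0}.
Arguments series_on_zero {k A lt S}.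
Arguments neq0_sum {k a b}.

Definition ord_ok {k : realFieldType} (X : lv k) :=
  (forall x, ~ llt X x x) /\
  (forall x y z, lmem X x -> lmem X y -> lmem X z -> llt X x y -> llt X y z -> llt X x z) /\
  (forall x y, lmem X x -> lmem X y -> llt X x y \/ x = y \/ llt X y x) /\
  lmem X (lone X).

Definition Pos {k : realFieldType} (X : lv k) := fun x => lmem X x /\ llt X (lone X) x.

Section Sharp.
Variable k : realFieldType.
Variable X : lv k.
Hypothesis OX : ord_ok X.

Let irrX := proj1 OX.
Let trX := proj1 (proj2 OX).
Let totX := proj1 (proj2 (proj2 OX)).
Lemma PM : forall x, Pos X x -> lmem X x. Proof. by move=> x []. Qed.

Lemma sh_mem (f : lR X -> k) : lmem (sharp X) f = series_on (llt X) (Pos X) f.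
Proof. by []. Qed.

Lemma sh_irr (f : lR (sharp X)) : ~ llt (sharp X) f f.
Proof. exact: slt_irr. Qed.

Lemma sh_asym (f g : lR (sharp X)) : lmem (sharp X) f -> lmem (sharp X) g ->
  llt (sharp X) f g -> llt (sharp X) g f -> False.
Proof. rewrite /sharp /=; exact: (slt_asym (lmem X) totX PM). Qed.

Lemma sh_trans (f g h : lR (sharp X)) : lmem (sharp X) f -> lmem (sharp X) g -> lmem (sharp X) h ->
  llt (sharp X) f g -> llt (sharp X) g h -> llt (sharp X) f h.
Proof. rewrite /sharp /=; exact: (slt_trans (lmem X) trX totX PM). Qed.

Lemma sh_total (f g : lR (sharp X)) : lmem (sharp X) f -> lmem (sharp X) g ->
  llt (sharp X) f g \/ f = g \/ llt (sharp X) g f.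
Proof. rewrite /sharp /=; exact: (slt_total (lmem X) trX totX PM). Qed.



Lemma sh_mem_add (f g : lR (sharp X)) : lmem (sharp X) f -> lmem (sharp X) g ->
  lmem (sharp X) (lmul (sharp X) f g).
Proof. rewrite /sharp /=; exact: (series_on_add (lmem X) trX totX PM). Qed.

Lemma sh_mem_opp (f : lR (sharp X)) : lmem (sharp X) f -> lmem (sharp X) (linv (sharp X) f).
Proof. rewrite /sharp /=; exact: series_on_opp. Qed.

Lemma sh_mem_one : lmem (sharp X) (lone (sharp X)).
Proof. rewrite /sharp /=; exact: series_on_zero. Qed.

Lemma ord_sharp : ord_ok (sharp X).
Proof. split; [exact: sh_irr | split; [exact: sh_trans | split; [exact: sh_total | exact: sh_mem_one]]]. Qed.

End Sharp.

Lemma push_img {k : realFieldType} {A B : Type} (f : A -> B) (a : A -> k) x :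
  (forall x y, f x = f y -> x = y) -> push f a (f x) = a x.
Proof.
move=> inj; rewrite /push; case: excluded_middle_informative => [Hx|N]; last first.
  by exfalso; apply: N; exists x.
destruct (constructive_indefinite_description _ Hx) as [c Hc]; simpl.
by rewrite (inj _ _ Hc).
Qed.

Lemma push_out {k : realFieldType} {A B : Type} (f : A -> B) (a : A -> k) y :
  ~ (exists x, f x = y) -> push f a y = 0.
Proof. by move=> N; rewrite /push; case: excluded_middle_informative. Qed.

Lemma push_cases {k : realFieldType} {A B : Type} (f : A -> B) (a : A -> k) y :
  (forall x y, f x = f y -> x = y) ->
  (exists x, y = f x /\ push f a y = a x) \/ push f a y = 0.
Proof.
move=> inj; have [[x Hx]|N] := classic (exists x, f x = y).
- by left; exists x; rewrite -Hx push_img.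
- by right; apply: push_out.
Qed.

Lemma push_add {k : realFieldType} {A B : Type} (f : A -> B) (a b : A -> k) :
  push f (fun x => a x + b x) = (fun y => push f a y + push f b y).
Proof.
apply: functional_extensionality => y; rewrite /push.
case: excluded_middle_informative => // _; by rewrite addr0.
Qed.

Lemma push_opp {k : realFieldType} {A B : Type} (f : A -> B) (a : A -> k) :
  push f (fun x => - a x) = (fun y => - push f a y).
Proof.
apply: functional_extensionality => y; rewrite /push.
case: excluded_middle_informative => // _; by rewrite oppr0.
Qed.

Lemma push_zero {k : realFieldType} {A B : Type} (f : A -> B) :
  push f (fun _ => 0 : k) = (fun _ => 0).
Proof.
apply: functional_extensionality => y; rewrite /push.
by case: excluded_middle_informative.
Qed.

Definition emb_ok {k : realFieldType} (X Y : lv k) (e : lR X -> lR Y) :=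
  (forall x y, e x = e y -> x = y) /\
  (forall x, lmem X x -> lmem Y (e x)) /\
  (forall x y, lmem X x -> lmem X y -> llt X x y -> llt Y (e x) (e y)) /\
  (forall x y, e (lmul X x y) = lmul Y (e x) (e y)) /\
  (forall x, e (linv X x) = linv Y (e x)) /\
  e (lone X) = lone Y.

Lemma emb_reflect {k : realFieldType} (X Y : lv k) e : ord_ok X -> ord_ok Y -> emb_ok X Y e ->
  forall x y, lmem X x -> lmem X y -> llt Y (e x) (e y) -> llt X x y.
Proof.
move=> [iX [tX [oX _]]] [iY [tY [oY _]]] [inj [em [el _]]] x y mx my h.
have [//|[exy|yx]] := oX x y mx my.
- by subst y; case: (iY _ h).
- have h2 := el _ _ my mx yx.
  by case: (iY _ (tY _ _ _ (em _ mx) (em _ my) (em _ mx) h h2)).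
Qed.

Lemma emb_sharp {k : realFieldType} (X Y : lv k) e : ord_ok X -> ord_ok Y -> emb_ok X Y e ->
  emb_ok (sharp X) (sharp Y) (push e).
Proof.
move=> OX OY EO.
have R := emb_reflect OX OY EO.
case: (OX) => [iX [tX [oX m1X]]]; case: (OY) => [iY [tY [oY m1Y]]].
case: (EO) => [inj [em [el [emul [einv eone]]]]].
split.
  move=> a b hab; apply: functional_extensionality => x.
  by rewrite -(push_img e a x inj) -(push_img e b x inj) hab.
split.
  move=> a [Ha Wa]; split.
  - move=> y; case: (push_cases e a y inj) => [[x [-> ->]] /Ha [mx lx]|-> //].
    split; first exact: em.
    rewrite -eone; exact: el.
  - move=> T HT [y0 Ty0].
    have [x0 [ey0 pa0]] : exists x0, y0 = e x0 /\ push e a y0 = a x0.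
      case: (push_cases e a y0 inj) => // h; by case: (HT _ Ty0).
    have ax0 : a x0 <> 0 by rewrite -pa0; exact: HT.
    have Tx0 : T (e x0) by rewrite -ey0.
    have [x1 [[ax1 Tx1] M1]] := Wa (fun x => a x <> 0 /\ T (e x)) (fun x h => proj1 h)
      (ex_intro _ x0 (conj ax0 Tx0)).
    exists (e x1); split=> // y Ty lt1y.
    case: (push_cases e a y inj) => [[x [ey py]]|py]; last by case: (HT _ Ty).
    subst y.
    have ax : a x <> 0 by rewrite -py; exact: HT.
    apply: (M1 x (conj ax Ty)).
    apply: R => //; [exact: (proj1 (Ha _ ax1)) | exact: (proj1 (Ha _ ax))].
split.
  move=> a b ma mb [w [h1 h2]].
  have mw : lmem X w := slt_mem (lmem X) (@PM _ X) ma mb (lt_neq h1).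
  exists (e w); split; first by rewrite !push_img.
  move=> z wz.
  have [[x ex]|N] := classic (exists x, e x = z); last by rewrite !push_out.
  subst z; rewrite !push_img //.
  apply: NNPP => ne; apply ne; apply: h2.
  have mx : lmem X x := slt_mem (lmem X) (@PM _ X) ma mb ne.
  exact: R.
split; first by move=> a b; exact: push_add.
split; first by move=> a; exact: push_opp.
exact: push_zero.
Qed.

Lemma ord_base (k : realFieldType) (G : ogroup) : ord_ok (base k G).
Proof.
split; first exact: og_lt_irr.
split; first by move=> x y z _ _ _; exact: og_lt_trans.
split=> //; by move=> x y _ _; exact: og_lt_total.
Qed.

Lemma l_one (k : realFieldType) (G : ogroup) (l : G -> G -> k) : prelog_section l ->
  l (og_one G) = (fun _ => 0).
Proof.
move=> [hm _]; apply: functional_extensionality => x.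
have := f_equal (fun f => f x) (hm (og_one G) (og_one G)); rewrite og_mul1 /= => E.
apply/eqP; rewrite -(addrI (l (og_one G) x) (etrans (addr0 _) E)) //.
Qed.

Lemma l_inv (k : realFieldType) (G : ogroup) (l : G -> G -> k) : prelog_section l ->
  forall g, l (og_inv G g) = (fun x => - l g x).
Proof.
move=> P g; apply: functional_extensionality => x.
have := f_equal (fun f => f x) ((proj1 P) (og_inv G g) g); rewrite og_mulV (l_one P) /= => E.
by apply/eqP; rewrite -addr_eq0 -E.
Qed.

Lemma emb_base (k : realFieldType) (G : ogroup) (l : G -> G -> k) : prelog_section l ->
  emb_ok (base k G) (sharp (base k G)) l.
Proof.
move=> P; case: (P) => [hm [hl hs]].
split.
  move=> x y e; case: (og_lt_total G x y) => [xy|[//|yx]].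
  - by have := hl _ _ xy; rewrite e => /slt_irr.
  - by have := hl _ _ yx; rewrite e => /slt_irr.
split.
  move=> x _; apply: series_on_weaken (hs x) => y h; by split.
split; first by move=> x y _ _; exact: hl.
split; first exact: hm.
split; first exact: l_inv.
exact: l_one.
Qed.

Lemma tower_ok (k : realFieldType) (G : ogroup) (l : G -> G -> k) : prelog_section l ->
  forall n, ord_ok (tower k G n) /\ emb_ok (tower k G n) (tower k G n.+1) (lsh l n).
Proof.
move=> P; elim=> [|n [O E]].
  split; [exact: ord_base | exact: emb_base].
split; first exact: ord_sharp.
exact: (emb_sharp O (ord_sharp O) E).
Qed.

Lemma expset_sub (k : realFieldType) (X : lv k) (S : lR X -> Prop) : ord_ok X ->
  (forall x, S x -> Pos X x) -> subgroup (sharp X) (series_on (llt X) S).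
Proof.
move=> [iX [tX [oX _]]] SP.
have SM : forall x, S x -> lmem X x by move=> x /SP [].
split; first by move=> a; exact: series_on_weaken.
split; first exact: series_on_zero.
split; first by move=> a b; exact: (series_on_add (lmem X) tX oX SM).
by move=> a; exact: series_on_opp.
Qed.

Lemma embed_sub (k : realFieldType) (X : lv k) (A : lR X -> Prop) e :
  emb_ok X (sharp X) e -> subgroup X A -> subgroup (sharp X) (fun z => exists a, A a /\ z = e a).
Proof.
move=> [_ [em [_ [emul [einv eone]]]]] [AM [A1 [Amul Ainv]]].
split; first by move=> z [a [Aa ->]]; exact/em/AM.
split; first by exists (lone X); split.
split; first by move=> x y [a [Aa ->]] [b [Ab ->]]; exists (lmul X a b); split; [exact: Amul|].
by move=> x [a [Aa ->]]; exists (linv X a); split; [exact: Ainv|].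
Qed.

Lemma prod_sub (k : realFieldType) (X : lv k) (A S : lR X -> Prop) e : ord_ok X ->
  emb_ok X (sharp X) e -> subgroup X A -> (forall x, S x -> Pos X x) ->
  subgroup (sharp X) (fun z => exists a alpha, A a /\ series_on (llt X) S alpha /\
                                 z = lmul (sharp X) (e a) alpha).
Proof.
move=> OX [_ [em [_ [emul [einv eone]]]]] [AM [A1 [Amul Ainv]]] SP.
have [BM [B1 [Bmul Binv]]] := expset_sub S OX SP.
split.
  move=> z [a [al [Aa [Sal ->]]]]; apply: sh_mem_add => //; [exact/em/AM | exact: BM].
split.
  exists (lone X), (lone (sharp X)); split=> //; split=> //.
  rewrite eone; apply: functional_extensionality => x /=; by rewrite addr0.
split.
  move=> x y [a [al [Aa [Sal ->]]]] [b [be [Ab [Sbe ->]]]].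
  exists (lmul X a b), (lmul (sharp X) al be); split; first exact: Amul.
  split; first exact: Bmul.
  rewrite emul; apply: functional_extensionality => t /=; by rewrite addrACA.
move=> x [a [al [Aa [Sal ->]]]].
exists (linv X a), (linv (sharp X) al); split; first exact: Ainv.
split; first exact: Binv.
rewrite einv; apply: functional_extensionality => t /=; by rewrite opprD.
Qed.

Section GroupFacts.
Variable G : ogroup.
Local Notation "x * y" := (og_mul G x y).
Local Notation one := (og_one G).
Local Notation inv := (og_inv G).
Local Notation lt := (og_lt G).

Lemma og_mulg1 x : x * one = x. Proof. by rewrite og_mulC og_mul1. Qed.
Lemma og_mulgV x : x * inv x = one. Proof. by rewrite og_mulC og_mulV. Qed.
Lemma og_inv_uniq x y : x * y = one -> x = inv y.
Proof. move=> h; by rewrite -(og_mulg1 x) -(og_mulgV y) og_mulA h og_mul1. Qed.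
Lemma og_asym {x y} : lt x y -> lt y x -> False.
Proof. move=> h1 h2; exact: (og_lt_irr G x (og_lt_trans G _ _ _ h1 h2)). Qed.
Lemma og_inv_gt1 x : lt x one -> lt one (inv x).
Proof. move=> h; have := og_lt_mul G _ _ (inv x) h; by rewrite og_mulgV og_mul1. Qed.

Definition gmono (f : G -> G) := (forall x y, f (x * y) = f x * f y) /\ (forall x y, lt x y -> lt (f x) (f y)).

Lemma gmono_inj f : gmono f -> forall x y, f x = f y -> x = y.
Proof.
move=> [_ hl] x y e; case: (og_lt_total G x y) => [xy|[//|yx]].
- by have := hl _ _ xy; rewrite e => /og_lt_irr.
- by have := hl _ _ yx; rewrite e => /og_lt_irr.
Qed.

Lemma gmono_one f : gmono f -> f one = one.
Proof.
move=> [hm _]; have e := hm one one; rewrite og_mul1 in e.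
have := f_equal (fun z => inv (f one) * z) e.
rewrite /= og_mulV og_mulA og_mulV og_mul1 => e2.
by rewrite -e2.
Qed.

Lemma gmono_inv f : gmono f -> forall x, f (inv x) = inv (f x).
Proof. move=> F x; apply: og_inv_uniq; by rewrite -(proj1 F) og_mulV gmono_one. Qed.

Lemma gmono_refl f : gmono f -> forall x y, lt (f x) (f y) -> lt x y.
Proof.
move=> F x y h; case: (og_lt_total G x y) => [//|[e|yx]].
- by subst y; case: (og_lt_irr G _ h).
- by case: (og_asym h (proj2 F _ _ yx)).
Qed.

Lemma gmono_comp f g : gmono f -> gmono g -> gmono (fun x => g (f x)).
Proof.
move=> [fm fl] [gm gl]; split; first by move=> x y; rewrite fm gm.
by move=> x y /fl /gl.
Qed.

Lemma gmono_iter f : gmono f -> forall m, gmono (iter m f).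
Proof.
move=> F; elim=> [|m IH]; first by split.
exact: (gmono_comp IH F).
Qed.
End GroupFacts.
Arguments gmono {G}.
Arguments og_asym {G x y}.

Lemma push_comp {k : realFieldType} {A B C : Type} (f : A -> B) (g : B -> C) (a : A -> k) :
  (forall x y, f x = f y -> x = y) -> (forall x y, g x = g y -> x = y) ->
  push (fun x => g (f x)) a = push g (push f a).
Proof.
move=> fi gi; apply: functional_extensionality => y.
have gfi : forall x y, g (f x) = g (f y) -> x = y by move=> x z /gi /fi.
have [[x <-]|N] := classic (exists x, g (f x) = y).
  by rewrite (push_img (fun x => g (f x)) a x gfi) (push_img g _ _ gi) push_img.
rewrite (push_out _ a N).
have [[z ez]|N2] := classic (exists z, g z = y).
  subst y; rewrite (push_img g _ _ gi) push_out //.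
  move=> [x ex]; apply: N; exists x; by rewrite ex.
by rewrite (push_out _ _ N2).
Qed.

Lemma push_slt {k : realFieldType} (G : ogroup) (f : G -> G) (a b : G -> k) : gmono f ->
  series_lt (og_lt G) a b -> series_lt (og_lt G) (push f a) (push f b).
Proof.
move=> F [w [h1 h2]]; have fi := gmono_inj F.
exists (f w); split; first by rewrite !push_img.
move=> z wz; have [[x ex]|N] := classic (exists x, f x = z); last by rewrite !push_out.
subst z; rewrite !push_img //; apply: h2; exact: (gmono_refl F).
Qed.

Lemma push_slt_refl {k : realFieldType} (G : ogroup) (f : G -> G) (a b : G -> k) : gmono f ->
  series_lt (og_lt G) (push f a) (push f b) -> series_lt (og_lt G) a b.
Proof.
move=> F [y [h1 h2]]; have fi := gmono_inj F.
have [[w ew]|N] := classic (exists x, f x = y); last by move: h1; rewrite !push_out // ltxx.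
subst y; rewrite !push_img // in h1.
exists w; split=> // z wz.
by rewrite -(push_img f a z fi) -(push_img f b z fi); apply: h2; apply: (proj2 F).
Qed.

Lemma growth0 (k : realFieldType) (G : ogroup) (l : G -> G -> k) (psi : G -> G) (H : G -> Prop) m :
  prelog_section l -> lmorphism l psi -> growth_axiom l H ->
  growth_axiom l (fun x => exists h, H h /\ x = iter m psi h).
Proof.
move=> P [pm [pl pp]] [[_ [H1 [Hmul Hinv]]] [[h0 [Hh0 h0n]] Hg]].
have F : gmono (iter m psi) by apply: gmono_iter; split.
have fi := gmono_inj F.
have pushl : forall g, push (iter m psi) (l g) = l (iter m psi g).
  elim: m {F fi} => [|m IH] g.
    apply: functional_extensionality => y; by rewrite (push_img id (l g) y (fun x y e => e)).
  have Fm : gmono (iter m psi) by apply: gmono_iter; split.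
  rewrite (push_comp (iter m psi) psi (l g) (gmono_inj Fm) (gmono_inj (conj pm pl))).
  by rewrite IH pp.
split.
  split=> //.
  split; first by exists (og_one G); split=> //; rewrite gmono_one.
  split; first by move=> x y [a [Ha ->]] [b [Hb ->]]; exists (og_mul G a b); split; [exact: Hmul|rewrite (proj1 F)].
  by move=> x [a [Ha ->]]; exists (og_inv G a); split; [exact: Hinv|rewrite gmono_inv].
split.
  exists (iter m psi h0); split; first by exists h0.
  by rewrite -(gmono_one F) => /fi.
move=> ? [h [Hh ->]] f [fs fw] fn.
pose f' := fun x => f (iter m psi x).
have ef : f = push (iter m psi) f'.
  apply: functional_extensionality => y.
  have [[x ex]|N] := classic (exists x, iter m psi x = y); first by subst y; rewrite push_img.
  rewrite (push_out _ _ N); apply: NNPP => fy; case: (fs _ fy) => [[z [_ ez]] _]; apply: N; by exists z.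
have f's : series_on (og_lt G) (fun x => H x /\ og_lt G (og_one G) x) f'.
  split.
    move=> z fz; case: (fs _ fz) => [[z' [Hz' ez]] lz].
    rewrite -(fi _ _ ez) in Hz'; split=> //.
    by apply: (gmono_refl F); rewrite gmono_one.
  move=> T HT [x0 Tx0].
  pose T2 := fun y => exists x, T x /\ y = iter m psi x.
  have HT2 : forall y, T2 y -> f y <> 0 by move=> y [x [Tx ->]]; exact: HT.
  have [y1 [[x1 [Tx1 ey1]] M1]] := fw T2 HT2 (ex_intro _ (iter m psi x0) (ex_intro _ x0 (conj Tx0 erefl))).
  subst y1.
  exists x1; split=> // z Tz lz; apply: (M1 (iter m psi z)); first by exists z.
  exact: (proj2 F).
have f'n : f' <> (fun _ => 0) by move=> e; apply: fn; rewrite ef e push_zero.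
have := Hg h Hh f' f's f'n.
move/(push_slt F); rewrite pushl.
suff -> : push (iter m psi) (sabs (og_lt G) f') = sabs (og_lt G) f by [].
have [pos|npos] := classic (series_lt (og_lt G) (fun _ => 0) f').
  rewrite (sabs_pos pos) -ef sabs_pos //.
  by rewrite ef -(push_zero (k:=k) (iter m psi)); apply: push_slt.
rewrite (sabs_npos npos) push_opp -ef sabs_npos // ef -(push_zero (k:=k) (iter m psi)).
by move/(push_slt_refl F).
Qed.

Lemma lle_lt_false (k : realFieldType) (X : lv k) u v : ord_ok X -> lmem X u -> lmem X v ->
  llt X u v -> lle X v u -> False.
Proof.
move=> [i [t _]] mu mv h [h2|e].
- exact: (i u (t _ _ _ mu mv mu h h2)).
- subst v; exact: (i u h).
Qed.

Section LEsec.
Variable k : realFieldType.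
Variable G : ogroup.
Variable l : G -> G -> k.
Variable psi : G -> G.
Variable H : G -> Prop.
Variable m : nat.
Hypothesis P : prelog_section l.
Hypothesis GA0 : growth_axiom l (Gnm l psi H m 0).

Local Notation T n := (tower k G n).
Local Notation A n := (Gnm l psi H m n).
Local Notation Ab n := (Gnm_above l psi H m n).

Lemma OK n : ord_ok (T n). Proof. exact: (proj1 (tower_ok P n)). Qed.
Lemma EK n : emb_ok (T n) (T n.+1) (lsh l n). Proof. exact: (proj2 (tower_ok P n)). Qed.

Lemma A_S n z : A n.+1 z <-> exists a alpha, A n a /\ series_on (llt (T n)) (Ab n) alpha /\
   z = lmul (T n.+1) (lsh l n a) alpha.
Proof. by []. Qed.

Lemma Ab_S n z : Ab n.+1 z <-> A n.+1 z /\ forall y, A n y -> llt (T n.+1) (lsh l n y) z.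
Proof. by []. Qed.

Lemma A_sub n : subgroup (T n) (A n) /\ (forall x, Ab n x -> Pos (T n) x).
Proof.
elim: n => [|n [S1 S2]].
  split; first exact: (proj1 GA0).
  by move=> x [_ h]; split.
have S' : subgroup (T n.+1) (A n.+1) := prod_sub (Ab n) (OK n) (EK n) S1 S2.
split=> // x [Ax Hx]; split; first exact: (proj1 S').
have := Hx _ (proj1 (proj2 S1)); by rewrite (proj2 (proj2 (proj2 (proj2 (proj2 (EK n)))))).
Qed.

Lemma A_mem {n x} : A n x -> lmem (T n) x.
Proof. exact: (proj1 (proj1 (A_sub n))). Qed.
Lemma A_one n : A n (lone (T n)).
Proof. exact: (proj1 (proj2 (proj1 (A_sub n)))). Qed.
Lemma Ab_pos n x : Ab n x -> Pos (T n) x.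
Proof. exact: (proj2 (A_sub n)). Qed.
Lemma lsh_one n : lsh l n (lone (T n)) = lone (T n.+1).
Proof. exact: (proj2 (proj2 (proj2 (proj2 (proj2 (EK n)))))). Qed.
Lemma lsh_mem {n x} : lmem (T n) x -> lmem (T n.+1) (lsh l n x).
Proof. exact: (proj1 (proj2 (EK n))). Qed.
Lemma lsh_lt {n x y} : lmem (T n) x -> lmem (T n) y -> llt (T n) x y -> llt (T n.+1) (lsh l n x) (lsh l n y).
Proof. exact: (proj1 (proj2 (proj2 (EK n)))). Qed.
Lemma lsh_inj {n x y} : lsh l n x = lsh l n y -> x = y.
Proof. exact: (proj1 (EK n)). Qed.
Lemma lsh_refl {n x y} : lmem (T n) x -> lmem (T n) y -> llt (T n.+1) (lsh l n x) (lsh l n y) -> llt (T n) x y.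
Proof. exact: (emb_reflect (OK n) (OK n.+1) (EK n)). Qed.

Lemma embA {n a} : A n a -> A n.+1 (lsh l n a).
Proof.
move=> Aa; exists a, (lone (T n.+1)); split=> //; split; first exact: series_on_zero.
apply: functional_extensionality => x /=; by rewrite addr0.
Qed.

Lemma ga_sub : subgroup (base k G) (A 0). Proof. exact: (proj1 GA0). Qed.

Definition mono (h : G) : G -> k := fun y => if excluded_middle_informative (y = h) then (1 : k) else 0.

Lemma mono_series h : A 0 h -> og_lt G (og_one G) h ->
  let f := mono h in
  series_on (og_lt G) (fun x => A 0 x /\ og_lt G (og_one G) x) f /\ f <> (fun _ => 0) /\
  sabs (og_lt G) f = f /\ (forall y, y <> h -> f y = 0).
Proof.
move=> Ah h1 f.
have fo : forall y, y <> h -> f y = 0 by move=> y yh; rewrite /f /mono; case: excluded_middle_informative.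
have fh : f h = 1 by rewrite /f /mono; case: excluded_middle_informative.
have sup : forall y, f y <> 0 -> y = h by move=> y fy; apply: NNPP => /fo.
split.
  split; first by move=> y /sup ->.
  move=> T' HT' [t Tt]; exists h; have := sup _ (HT' _ Tt) => eth; subst t.
  split=> // y Ty; rewrite (sup _ (HT' _ Ty)); exact: og_lt_irr.
split; first by move=> e; have := f_equal (fun g => g h) e; rewrite /= fh => /eqP; rewrite oner_eq0.
split=> //; apply: sabs_pos; apply: (lead_pos (x0:=h)); last by rewrite fh ltr01.
move=> y hy; apply: fo => e; subst y; exact: (og_lt_irr G _ hy).
Qed.

Lemma D0 {b x} : A 0 b -> l b x <> 0 -> exists y, A 0 y /\ lle (T 0) x y.
Proof.
move=> Ab0 lbx.
case: GA0 => [[_ [A1 [Amul Ainv]]] [[h0 [Ah0 h0n]] Hg]].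
have [h [Ah h1]] : exists h, A 0 h /\ og_lt G (og_one G) h.
  case: (og_lt_total G h0 (og_one G)) => [lt0|[//|gt0]]; last by exists h0.
  by exists (og_inv G h0); split; [exact: Ainv | exact: og_inv_gt1].
have [xh|nxh] := classic (lle (T 0) x h); first by exists h.
have hx : og_lt G h x.
  case: (og_lt_total G x h) => [xh|[xh|//]]; exfalso; apply: nxh; [by left|by right].
have [fs fw] := proj2 (proj2 P) b.
have lbn : l b <> (fun _ => 0) by move=> e; apply: lbx; rewrite e.
have [x1 [l1 L1]] := lead_ex (conj fs fw) lbn.
have hx1 : og_lt G h x1.
  case: (og_lt_total G x x1) => [xx1|[<-//|x1x]].
  - exact: og_lt_trans hx xx1.
  - by case: lbx; apply: L1.
have [fS [fn [fa fo]]] := mono_series Ah h1.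
set f := mono h in fS fn fa fo.
have key : forall g, A 0 g -> 0 < l g x1 -> (forall y, og_lt G x1 y -> l g y = 0) -> False.
  move=> g Ag gp gz.
  have := Hg g Ag f fS fn; rewrite fa => [[w [w1 w2]]].
  have fx1 : f x1 = 0 by apply: fo => e; subst x1; exact: (og_lt_irr G _ hx1).
  case: (og_lt_total G w x1) => [wx1|[e|x1w]].
  - by move: gp; rewrite (w2 _ wx1) fx1 ltxx.
  - by subst w; move: (lt_trans gp w1); rewrite fx1 ltxx.
  - have fw0 : f w = 0.
      apply: fo => e; subst w; exact: (og_asym hx1 x1w).
    by move: w1; rewrite (gz _ x1w) fw0 ltxx.
exfalso; have : l b x1 != 0 by apply/eqP.
move/lt_total/orP=> [neg|pos].
- apply: (key (og_inv G b)); first exact: Ainv.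
  + by rewrite (l_inv P) oppr_gt0.
  + by move=> y /L1; rewrite (l_inv P) => ->; rewrite oppr0.
- exact: (key b).
Qed.

Lemma Dn n : forall a, A n.+1 a -> forall x, a x <> 0 -> exists y, A n y /\ lle (T n) x y.
Proof.
elim: n => [|n IH].
  move=> a [b [al [Ab0 [Sal ->]]]] x /= /neq0_sum [lb|alx]; first exact: (D0 Ab0 lb).
  by exists x; split; [exact: (proj1 (proj1 Sal x alx)) | right].
move=> a [b [al [Ab1 [Sal ->]]]] x /= /neq0_sum [pb|alx]; last first.
  by exists x; split; [exact: (proj1 (proj1 Sal x alx)) | right].
case: (push_cases (lsh l n) b x (@lsh_inj n)) => [[x' [ex e]]|e]; last by case: pb.
subst x; rewrite e in pb.
have [y' [Ay' le']] := IH b Ab1 x' pb.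
exists (lsh l n y'); split; first exact: embA.
case: le' => [lt'|->]; last by right.
left; apply: lsh_lt => //; last exact: A_mem.
exact: (proj1 ((proj1 (A_mem Ab1)) x' pb)).
Qed.

Lemma dom {n c x0 y} : A n.+1 c -> Ab n.+1 x0 -> push (lsh l n) c y <> 0 ->
  lmem (T n.+1) y /\ llt (T n.+1) y x0.
Proof.
move=> Ac [Ax0 Hx0] py.
case: (push_cases (lsh l n) c y (@lsh_inj n)) => [[x' [ex e]]|e]; last by case: py.
subst y; rewrite e in py.
have mx' : lmem (T n) x' := proj1 ((proj1 (A_mem Ac)) x' py).
have [y' [Ay' le']] := Dn Ac x' py.
have mlx : lmem (T n.+1) (lsh l n x') := lsh_mem mx'.
split=> //.
case: le' => [lt'|e']; last by subst y'; exact: (Hx0 _ Ay').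
have [_ [t _]] := OK n.+1.
apply: (t _ _ _ mlx (lsh_mem (A_mem Ay')) (A_mem Ax0)); last exact: Hx0.
exact: lsh_lt (A_mem Ay') lt'.
Qed.

Lemma convex N : convex_in (T N.+1) (embed l N (A N)) (A N.+1).
Proof.
case: N => [|n].
  move=> z1 z2 z [a1 [Aa1 ->]] [a2 [Aa2 ->]] Az le1 le2.
  have Az' := Az; case: Az' => [a [al [Aa [Sal ez]]]].
  have [al0|aln] := classic (al = fun _ => 0).
    exists a; split=> //; rewrite ez al0; apply: functional_extensionality => x /=; by rewrite addr0.
  have [x0 [ax0 L0]] := lead_ex Sal aln.
  case: GA0 => [[_ [A1 [Amul Ainv]]] [_ Hg]].
  have O1 := OK 1.
  have mz : lmem (T 1) z := A_mem Az.
  have ml1 : lmem (T 1) (l a1) := @lsh_mem 0 a1 I.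
  have ml2 : lmem (T 1) (l a2) := @lsh_mem 0 a2 I.
  have alm : lmem (T 1) al := series_on_weaken (fun x h => Ab_pos h) Sal.
  have zm0 : lmem (T 1) (fun _ => 0) := proj2 (proj2 (proj2 O1)).
  exfalso; have : al x0 != 0 by apply/eqP.
  move/lt_total/orP=> [neg|pos].
  - have sn : series_lt (og_lt G) al (fun _ => 0) := lead_neg L0 neg.
    have nsp : ~ series_lt (og_lt G) (fun _ => 0) al := fun h => sh_asym (OK 0) alm zm0 sn h.
    have h2 := Hg (og_mul G a (og_inv G a1)) (Amul _ _ Aa (Ainv _ Aa1)) al Sal aln.
    rewrite (sabs_npos nsp) in h2.
    have h3 := slt_add (h := fun x => al x + l a1 x) h2.
    have la : l a = fun x => l (og_mul G a (og_inv G a1)) x + l a1 x.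
      by rewrite -(proj1 P) -og_mulA og_mulV og_mulg1.
    have e1 : (fun x => l (og_mul G a (og_inv G a1)) x + (al x + l a1 x)) = z.
      rewrite ez; apply: functional_extensionality => x /=.
      by rewrite la [al x + _]addrC addrA.
    have e2 : (fun x => - al x + (al x + l a1 x)) = l a1.
      apply: functional_extensionality => x; by rewrite addrA addNr add0r.
    rewrite e1 e2 in h3.
    exact: (lle_lt_false O1 mz ml1 h3 le1).
  - have sp : series_lt (og_lt G) (fun _ => 0) al := lead_pos L0 pos.
    have h2 := Hg (og_mul G a2 (og_inv G a)) (Amul _ _ Aa2 (Ainv _ Aa)) al Sal aln.
    rewrite (sabs_pos sp) in h2.
    have h3 := slt_add (h := l a) h2.
    have e1 : (fun x => l (og_mul G a2 (og_inv G a)) x + l a x) = l a2.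
      by rewrite -(proj1 P) -og_mulA og_mulV og_mulg1.
    have e2 : (fun x => al x + l a x) = z.
      by rewrite ez; apply: functional_extensionality => x /=; rewrite addrC.
    rewrite e1 e2 in h3.
    exact: (lle_lt_false O1 ml2 mz h3 le2).
move=> z1 z2 z [b1 [Ab1 ->]] [b2 [Ab2 ->]] Az le1 le2.
have Az' := Az; case: Az' => [b [al [Abb [Sal ez]]]].
have [al0|aln] := classic (al = fun _ => 0).
  exists b; split=> //; rewrite ez al0; apply: functional_extensionality => x /=; by rewrite addr0.
have [x0 [ax0 L0]] := lead_ex Sal aln.
have Abx0 : Ab n.+1 x0 := proj1 Sal x0 ax0.
have [i1 [t1 _]] := OK n.+1.
have Z0 : forall c, A n.+1 c -> push (lsh l n) c x0 = 0.
  move=> c Ac; apply: NNPP => h; have [_ h2] := dom Ac Abx0 h; exact: (i1 _ h2).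
have Z1 : forall c, A n.+1 c -> forall w, llt (T n.+1) x0 w -> push (lsh l n) c w = 0.
  move=> c Ac w xw; apply: NNPP => h; have [mw h2] := dom Ac Abx0 h.
  exact (i1 _ (t1 _ _ _ mw (A_mem (proj1 Abx0)) mw h2 xw)).
have O2 := OK n.+2.
have mz : lmem (T n.+2) z := A_mem Az.
have mb1 : lmem (T n.+2) (lsh l n.+1 b1) := lsh_mem (A_mem Ab1).
have mb2 : lmem (T n.+2) (lsh l n.+1 b2) := lsh_mem (A_mem Ab2).
have zx0 : z x0 = al x0 by rewrite ez /= Z0 // add0r.
have zw : forall w, llt (T n.+1) x0 w -> z w = 0 by move=> w xw; rewrite ez /= Z1 // L0 // addr0.
exfalso; have : al x0 != 0 by apply/eqP.
move/lt_total/orP=> [neg|pos].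
- have h : llt (T n.+2) z (lsh l n.+1 b1).
    exists x0; split; first by rewrite zx0 /= Z0.
    by move=> w xw; rewrite zw //= Z1.
  exact: (lle_lt_false O2 mz mb1 h le1).
- have h : llt (T n.+2) (lsh l n.+1 b2) z.
    exists x0; split; first by rewrite zx0 /= Z0.
    by move=> w xw; rewrite zw //= Z1.
  exact: (lle_lt_false O2 mb2 mz h le2).
Qed.

Lemma disjoint N : forall z, embed l N (A N) z -> ExpSet N (Ab N) z -> z = lone (T N.+1).
Proof.
case: N => [|n] z [g [Ag ez]] Sz.
  subst z; apply: NNPP => ne.
  have [x0 [ax0 L0]] := lead_ex Sz ne.
  case: GA0 => [[_ [A1 [Amul Ainv]]] [_ Hg]].
  have alm : lmem (T 1) (l g) := series_on_weaken (fun x h => Ab_pos h) Sz.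
  have zm0 : lmem (T 1) (fun _ => 0) := proj2 (proj2 (proj2 (OK 1))).
  have : l g x0 != 0 by apply/eqP.
  move/lt_total/orP=> [neg|pos].
  - have sn : series_lt (og_lt G) (l g) (fun _ => 0) := lead_neg L0 neg.
    have nsp : ~ series_lt (og_lt G) (fun _ => 0) (l g) := fun h => sh_asym (OK 0) alm zm0 sn h.
    have h2 := Hg (og_inv G g) (Ainv _ Ag) (l g) Sz ne.
    rewrite (sabs_npos nsp) (l_inv P) in h2; exact: (slt_irr h2).
  - have sp : series_lt (og_lt G) (fun _ => 0) (l g) := lead_pos L0 pos.
    have h2 := Hg g Ag (l g) Sz ne.
    rewrite (sabs_pos sp) in h2; exact: (slt_irr h2).
subst z; apply: functional_extensionality => y /=; apply: NNPP => zy.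
have [_ h] := dom Ag (proj1 Sz y zy) zy.
exact: (proj1 (OK n.+1) _ h).
Qed.

Lemma part3 N : forall al, ExpSet N (fun x => A N x /\ llt (T N) (lone (T N)) x) al -> A N.+1 al.
Proof.
elim: N => [|n IH].
  move=> al Sal; exists (og_one G), al; split; first exact: (A_one 0).
  split=> //; apply: functional_extensionality => x /=; by rewrite (l_one P) add0r.
move=> al [als alw].
pose gam := fun x => if excluded_middle_informative (Ab n.+1 x) then al x else 0.
pose bet := fun x => if excluded_middle_informative (Ab n.+1 x) then 0 else al x.
have eab : forall x, al x = bet x + gam x.
  by move=> x; rewrite /bet /gam; destruct (excluded_middle_informative (Ab n.+1 x)); rewrite ?add0r ?addr0.
have gs : series_on (llt (T n.+1)) (Ab n.+1) gam.
  split.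
    by move=> x; rewrite /gam; destruct (excluded_middle_informative (Ab n.+1 x)).
  refine (awo_sub alw _) => x; rewrite /gam; by destruct (excluded_middle_informative (Ab n.+1 x)).
have key : forall x, bet x <> 0 -> exists x', x = lsh l n x' /\ A n x' /\ llt (T n) (lone (T n)) x'.
  move=> x; rewrite /bet; destruct (excluded_middle_informative (Ab n.+1 x)) as [ab|nab]; first by []. intro alx.
  have [Ax lx] := als x alx.
  have [y [Ay ny]] : exists y, A n y /\ ~ llt (T n.+1) (lsh l n y) x.
    apply: NNPP => N; apply nab; apply/Ab_S; split; first exact: Ax.
    move=> y Ay; apply: NNPP => ny; apply: N; exists y; by split.
  have mx := A_mem Ax.
  have my : lmem (T n.+1) (lsh l n y) := lsh_mem (A_mem Ay).
  have le2 : lle (T n.+1) x (lsh l n y).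
    case: (proj1 (proj2 (proj2 (OK n.+1))) _ _ mx my) => [h|[h|h]]; [by left|by right|by case: ny].
  have le1 : lle (T n.+1) (lsh l n (lone (T n))) x by left; rewrite lsh_one.
  have [x' [Ax' ex']] := convex (ex_intro _ _ (conj (A_one n) erefl)) (ex_intro _ _ (conj Ay erefl)) Ax le1 le2.
  exists x'; split=> //; split=> //.
  apply: lsh_refl; [exact: (A_mem (A_one n)) | exact: A_mem | by rewrite lsh_one -ex'].
pose r := fun x' => bet (lsh l n x').
have rA : forall x', r x' <> 0 -> A n x' /\ llt (T n) (lone (T n)) x'.
  move=> x' rx'; have [x'' [e [Ax'' lx'']]] := key _ rx'; by rewrite (lsh_inj e).
have rs : series_on (llt (T n)) (fun x => A n x /\ llt (T n) (lone (T n)) x) r.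
  split=> // T' HT' [t Tt].
  pose T2 := fun y => exists x', T' x' /\ y = lsh l n x'.
  have HT2 : forall y, T2 y -> al y <> 0.
    move=> y [x' [Tx' ->]] e; apply: (HT' _ Tx'); rewrite /r /bet e; by destruct (excluded_middle_informative (Ab n.+1 (lsh l n x'))).
  have [y1 [[x1 [Tx1 ey1]] M1]] := alw T2 HT2 (ex_intro _ _ (ex_intro _ t (conj Tt erefl))).
  subst y1; exists x1; split=> // x' Tx' lt1.
  apply: (M1 (lsh l n x')); first by exists x'.
  apply: lsh_lt => //; [exact: (A_mem (proj1 (rA _ (HT' _ Tx1)))) | exact: (A_mem (proj1 (rA _ (HT' _ Tx'))))].
have Ar : A n.+1 r := IH r rs.
have pr : forall x, push (lsh l n) r x = bet x.
  move=> x; have [bz|bnz] := classic (bet x = 0).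
  - case: (push_cases (lsh l n) r x (@lsh_inj n)) => [[x' [ex ->]]|->]; last by rewrite bz.
    by subst x.
  - have [x' [ex _]] := key _ bnz; subst x; rewrite push_img //; exact: @lsh_inj.
exists r, gam; split=> //; split=> //.
apply: functional_extensionality => x /=; by rewrite pr eab.
Qed.

End LEsec.
Unset Implicit Arguments.

Theorem proposition9 (k : realFieldType) (log : k -> k) (G : ogroup)
  (l : G -> G -> k) (psi : G -> G) (H : G -> Prop) :
  is_surj_log log -> prelog_section l -> lmorphism l psi -> growth_axiom l H ->
  forall m : nat,
    growth_axiom l (Gnm l psi H m 0) /\
    (forall n : nat,
       antilex_product (tower k G n.+1) (Gnm l psi H m n.+1)
         (embed l n (Gnm l psi H m n))
         (ExpSet n (Gnm_above l psi H m n))) /\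
    (forall n : nat,
       forall alpha : lR (tower k G n.+1),
         ExpSet n (fun x => Gnm l psi H m n x /\
                          llt (tower k G n) (lone (tower k G n)) x) alpha ->
         Gnm l psi H m n.+1 alpha).
Proof.
move=> _ P M GA m.
have GA0 := growth0 m P M GA.
split; first exact: GA0.
split; last by move=> n al; exact: (part3 P GA0).
move=> n.
split; first exact: (embed_sub (EK P n) (proj1 (A_sub P GA0 n))).
split; first exact: (expset_sub _ (OK P n) (fun x h => Ab_pos P GA0 h)).
split; first exact: (proj1 (A_sub P GA0 n.+1)).
split.
  move=> z; split.
  - move=> [a [al [Aa [Sal ->]]]]; exists (lsh l n a), al; split; first by exists a.
    by split.
  - move=> [a [b [[a' [Aa' ->]] [Sb ->]]]]; by exists a', b.
split; first by move=> z h1 h2; exact: (disjoint P GA0 h1 h2).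
move=> a1 a2 z h1 h2 h3 h4 h5; exact: (convex P GA0 h1 h2 h3 h4 h5).
Qed.
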